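(* Let $(X_n)_{n\ge0}$ be an ergodic discrete-time Markov chain on a finite state space $\mathcal S$ with transition probabilities $p_{xy}$ and stationary distribution $\pi$, and let $0\in\mathcal S$ be one of its states. Suppose there is a non-negative function $f:\mathcal S\to\mathbb R$ and constants $\varepsilon>0$, $c_0>0$, $C>0$ such that \[ f(0)=0,\qquad \max_{x\in\mathcal S:\ p_{0x}>0}f(x)=c_0,\qquad |f(X_{n+1})-f(X_n)|\le C, \] \[ \mathbb E\big(f(X_{n+1})-f(X_n)\mid X_n=x\big)<-\varepsilon\quad\text{for all }x\ne0. \] Then there are $c_1,c_2>0$ depending only on $c_0,C,\varepsilon$ such that for all $k>0$, \[ \pi(A_k)\le c_1e^{-c_2k},\qquad\text{where }A_k=\{x\in\mathcal S: f(x)>k\}. \] *)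

(* Defs.v *)
From HB Require Import structures.
From mathcomp Require Import all_boot all_order all_algebra.
From mathcomp Require Import all_classical all_reals all_analysis.
Set Implicit Arguments. Unset Strict Implicit. Unset Printing Implicit Defensive.
Import Order.TTheory GRing.Theory Num.Theory.
Local Open Scope ring_scope.

Section Markov.
Variables (R : realType) (T : finType).

Definition stochastic (P : T -> T -> R) : Prop :=
  (forall x y, 0 <= P x y) /\ (forall x, \sum_(y : T) P x y = 1).

Fixpoint nstep (P : T -> T -> R) (n : nat) (x y : T) : R :=
  match n with
  | 0%N => if x == y then 1 else 0
  | n'.+1 => \sum_(z : T) nstep P n' x z * P z y
  end.

Definition irreducible (P : T -> T -> R) : Prop :=
  forall x y, exists n : nat, 0 < nstep P n x y.

(* every state has period 1: the gcd of {n >= 1 : p^{(n)}_{xx} > 0} is 1 *)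
Definition aperiodic (P : T -> T -> R) : Prop :=
  forall x (d : nat), (forall n : nat, (0 < n)%N -> 0 < nstep P n x x -> (d %| n)%N) -> d = 1%N.

Definition ergodic (P : T -> T -> R) : Prop :=
  stochastic P /\ irreducible P /\ aperiodic P.

Definition stationary (P : T -> T -> R) (pi : T -> R) : Prop :=
  (forall x, 0 <= pi x) /\ (\sum_(x : T) pi x = 1) /\
  (forall y, pi y = \sum_(x : T) pi x * P x y).

Definition drift (P : T -> T -> R) (f : T -> R) (x : T) : R :=
  \sum_(y : T) P x y * (f y - f x).

Definition piA (pi : T -> R) (f : T -> R) (k : R) : R :=
  \sum_(x : T | k < f x) pi x.

End Markov.

(* Main.v *)
Require Import Defs.
From HB Require Import structures.
From mathcomp Require Import all_boot all_order all_algebra.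
From mathcomp Require Import all_classical all_reals all_analysis.
From mathcomp Require Import ring lra.
Import Order.TTheory GRing.Theory Num.Theory.
Local Open Scope ring_scope.
Local Open Scope convex_scope.
Lemma exp_chord (R : realType) (a u : R) : 0 < a -> -a <= u -> u <= a ->
  expR u <= ((a - u) * expR (-a) + (a + u) * expR a) / (2 * a).
Proof.
move=> a0 h1 h2.
have t0 : 0 <= (a - u) / (2 * a) by apply: divr_ge0; lra.
have t1 : (a - u) / (2 * a) <= 1 by rewrite ler_pdivrMr; lra.
have an : a != 0 by rewrite lt0r_neq0.
have a2 : (2:R) != 0 by rewrite lt0r_neq0.
have E1 : (a - u) / (2 * a) * - a + (1 - (a - u) / (2 * a)) * a = u.
  field. all: try exact: an. all: try exact: a2. all: try by rewrite mulf_neq0.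
have E2 : (a - u) / (2 * a) * expR (- a) + (1 - (a - u) / (2 * a)) * expR a =
   ((a - u) * expR (-a) + (a + u) * expR a) / (2 * a).
  field. all: try exact: an. all: try exact: a2. all: try by rewrite mulf_neq0.
have := convex_expR (Itv01 t0 t1) (-a) a.
rewrite !convRE /=.
rewrite [X in expR X]E1.
by rewrite E2.
Qed.

Lemma step (R : realType) (T : finType) (P : T -> T -> R) (f : T -> R) (x : T) (a C : R) :
  0 < a -> 0 < C -> (forall y, 0 <= P x y) -> \sum_y P x y = 1 ->
  (forall y, 0 < P x y -> `|f y - f x| <= C) ->
  \sum_y P x y * expR (a / C * f y) <=
  expR (a / C * f x) * ((expR (-a) + expR a) / 2 +
     a / C * ((expR a - expR (-a)) / (2 * a)) * \sum_y P x y * (f y - f x)).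
Proof.
move=> a0 C0 Pge0 Psum hC.
set al := (expR (-a) + expR a) / 2.
set be := a / C * ((expR a - expR (-a)) / (2 * a)).
have an : a != 0 by rewrite lt0r_neq0.
have Cn : C != 0 by rewrite lt0r_neq0.
have -> : al + be * \sum_y P x y * (f y - f x) = \sum_y P x y * (al + be * (f y - f x)).
  have -> : \sum_y P x y * (al + be * (f y - f x)) = \sum_y (al * P x y + be * (P x y * (f y - f x))).
    by apply: eq_bigr => y _; ring.
  by rewrite big_split /= -!mulr_sumr Psum mulr1.
rewrite mulr_sumr; apply: ler_sum => y _.
have [Py0|Pyp] := eqVneq (P x y) 0.
  by rewrite Py0 !mul0r mulr0.
have Pyp' : 0 < P x y by rewrite lt_neqAle eq_sym Pyp Pge0.
have := hC y Pyp'; rewrite ler_norml => /andP [h1 h2].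
have e : a / C * f y = a / C * f x + a / C * (f y - f x) by ring.
rewrite e expRD mulrCA; apply: ler_wpM2l; first exact: expR_ge0.
apply: ler_wpM2l; first exact: Pge0.
have aC : 0 <= a / C by rewrite ltW // divr_gt0.
have u1 : - a <= a / C * (f y - f x).
  have -> : - a = a / C * (- C) by field.
  by apply: ler_wpM2l.
have u2 : a / C * (f y - f x) <= a.
  have {2}-> : a = a / C * C by field.
  by apply: ler_wpM2l.
apply: (le_trans (@exp_chord _ _ _ a0 u1 u2 : _ <= _)).
rewrite le_eqVlt; apply/orP; left; apply/eqP.
by rewrite /al /be; field; rewrite an Cn.
Qed.
Local Close Scope convex_scope.

Theorem lemma2 (R : realType) (c0 C eps : R) :
  0 < eps -> 0 < c0 -> 0 < C ->
  exists c1 c2 : R, 0 < c1 /\ 0 < c2 /\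
    forall (T : finType) (P : T -> T -> R) (pi : T -> R) (f : T -> R) (s0 : T),
      ergodic P -> stationary P pi ->
      (forall x, 0 <= f x) ->
      f s0 = 0 ->
      (forall x, 0 < P s0 x -> f x <= c0) ->
      (exists x, 0 < P s0 x /\ f x = c0) ->
      (forall x y, 0 < P x y -> `|f y - f x| <= C) ->
      (forall x, x != s0 -> drift P f x < - eps) ->
      forall k : R, 0 < k -> piA pi f k <= c1 * expR (- (c2 * k)).
Proof.
move=> he hc0 hC.
set r := eps / (eps + C).
have r0 : 0 < r by rewrite divr_gt0 // addr_gt0.
have r1 : r < 1 by rewrite ltr_pdivrMr ?addr_gt0 // mul1r ltrDl.
have rC : r * C <= eps.
  by rewrite /r mulrAC ler_pdivrMr ?addr_gt0 //; nra.
set a := ln (1 + r).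
have a0 : 0 < a by apply: ln_gt0; lra.
have ea : expR a = 1 + r by rewrite lnK // posrE; lra.
have ema : expR (- a) = (1 + r)^-1 by rewrite expRN ea.
set th := a / C.
have th0 : 0 < th by rewrite divr_gt0.
set rho := 1 - r ^+ 2 / 2.
set E := expR (th * c0).
have E1 : 1 <= E by rewrite /E -expR0 ler_expR; apply: mulr_ge0; apply: ltW.
set M := 1 + E / (r ^+ 2 / 2).
have r2 : 0 < r ^+ 2 / 2 by apply: divr_gt0 => //; apply: exprn_gt0.
have M0 : 0 < M by rewrite /M; apply: addr_gt0 => //; apply: divr_gt0 => //; lra.
exists M, th; split => //; split => //.
move=> T P pi f s0 [[Pge0 Psum] _] [pige0 [pisum pist]] fge0 fs0 fc0 _ fC hdrift k k0.
set V := fun x => expR (th * f x).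
have key1 : forall x, x != s0 -> \sum_y P x y * V y <= rho * V x.
  move=> x xs0.
  apply: le_trans (@step _ _ P f x a C a0 hC (Pge0 x) (Psum x) (fC x)) _.
  rewrite -/th mulrC; apply: ler_wpM2r; first exact: expR_ge0.
  have hd := hdrift x xs0; rewrite /drift in hd.
  set dr := \sum_y P x y * (f y - f x) in hd *.
  rewrite ea ema.
  have be0 : 0 <= th * ((1 + r - (1 + r)^-1) / (2 * a)).
    apply: mulr_ge0; first exact: ltW.
    apply: divr_ge0; last by apply: mulr_ge0 => //; apply: ltW.
    rewrite subr_ge0; apply: (@le_trans _ _ 1); first by rewrite invf_le1; lra.
    lra.
  apply: (@le_trans _ _ (((1 + r)^-1 + (1 + r)) / 2 + th * ((1 + r - (1 + r)^-1) / (2 * a)) * (- (r * C)))).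
    rewrite lerD2l; apply: ler_wpM2l => //; lra.
  rewrite le_eqVlt; apply/orP; left; apply/eqP.
  rewrite /th /rho; field.
  by apply/and3P; split; rewrite lt0r_neq0 //; lra.
have key2 : \sum_y P s0 y * V y <= E.
  rewrite -[E]mul1r -(Psum s0) mulr_suml; apply: ler_sum => y _.
  have [Py0|Pyp] := eqVneq (P s0 y) 0; first by rewrite Py0 !mul0r.
  have Pyp' : 0 < P s0 y by rewrite lt_neqAle eq_sym Pyp Pge0.
  apply: ler_wpM2l; first exact: Pge0.
  by rewrite /V /E ler_expR; apply: ler_wpM2l; [apply: ltW | apply: fc0].
have Vge0 : forall x, 0 <= V x by move=> x; exact: expR_ge0.
have Vs0 : V s0 = 1 by rewrite /V fs0 mulr0 expR0.
set Stot := \sum_x pi x * V x.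
have h1 : Stot = \sum_x pi x * \sum_y P x y * V y.
  rewrite /Stot (eq_bigr (fun y => \sum_x pi x * P x y * V y)); last first.
    by move=> y _; rewrite {1}pist mulr_suml.
  rewrite exchange_big /=; apply: eq_bigr => x _.
  by rewrite mulr_sumr; apply: eq_bigr => y _; rewrite mulrA.
set W := fun x => if x == s0 then E else rho * V x.
have h2 : Stot <= \sum_x pi x * W x.
  rewrite h1; apply: ler_sum => x _; apply: ler_wpM2l; first exact: pige0.
  rewrite /W; case: eqP => [->|/eqP ne]; [exact: key2 | exact: key1].
set S := \sum_(x | x != s0) pi x * V x.
have S0 : 0 <= S by apply: sumr_ge0 => x _; apply: mulr_ge0.
have hS : Stot = pi s0 + S by rewrite /Stot (bigD1 s0) //= Vs0 mulr1.
have hW : \sum_x pi x * W x = pi s0 * E + rho * S.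
  rewrite (bigD1 s0) //= /W eqxx; congr (_ + _).
  rewrite /S mulr_sumr; apply: eq_bigr => x /negbTE ->.
  by rewrite mulrCA.
have p1 : pi s0 <= 1.
  rewrite -pisum (bigD1 s0) //= lerDl; apply: sumr_ge0 => x _; exact: pige0.
have p0 := pige0 s0.
have hSb : r ^+ 2 / 2 * S <= E.
  have : pi s0 + S <= pi s0 * E + rho * S by rewrite -hS -hW.
  rewrite /rho => h; nra.
have hStot : Stot <= M.
  rewrite hS /M; apply: lerD => //.
  by rewrite ler_pdivlMr // mulrC.
rewrite /piA.
apply: (@le_trans _ _ (\sum_(x | k < f x) pi x * V x * expR (- (th * k)))).
  apply: ler_sum => x hx; rewrite -mulrA -{1}[pi x]mulr1; apply: ler_wpM2l; first exact: pige0.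
  rewrite /V -expRD -expR0 ler_expR -mulrN -mulrDr; apply: mulr_ge0; [exact: ltW | lra].
rewrite -mulr_suml; apply: ler_wpM2r; first exact: expR_ge0.
apply: le_trans hStot.
rewrite /Stot [X in _ <= X](bigID (fun x => k < f x)) /= lerDl.
by apply: sumr_ge0 => x _; apply: mulr_ge0.
Qed.
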